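(* Let $S$ be a discrete set, $N\ge 1$, and let $\{P_\theta\}_{\theta}$ be a family of probability distributions on $S^N$. Let $s^1,\dots,s^L\in S^N$ be any $L$ data points, with empirical distribution $\hat P_L(s)=\frac1L\sum_{\mu=1}^L\delta_{s,s^\mu}$. For each $i\in\{1,\dots,N\}$ define the Shannon entropy of the empirical marginal $$H_i(\hat P_L)=-\sum_{s_{-i}}\hat P_L(s_{-i})\ln \hat P_L(s_{-i}),\qquad \hat P_L(s_{-i})=\sum_{s_i}\hat P_L(s).$$ Then for every parameter $\theta$, $$\mathcal{PL}_L(\theta)-\sum_{i=1}^N H_i(\hat P_L)\;\ge\; N\,\mathcal{L}_L(\theta),$$ where $\mathcal{L}_L(\theta)=\frac1L\sum_{\mu=1}^L\log P_\theta(s^\mu)$ and $\mathcal{PL}_L(\theta)=\frac1L\sum_{\mu=1}^L\sum_{i=1}^N\log P_\theta(s^\mu_i\mid s^\mu_{-i})$.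
   Context: For $s=(s_1,\dots,s_N)$ write $s_{-i}=(s_1,\dots,s_{i-1},s_{i+1},\dots,s_N)$. The conditional distribution is $P_\theta(s_i\mid s_{-i})=P_\theta(s)/\sum_{s_i}P_\theta(s)$ (assumed well defined, i.e. the marginals $P_\theta(s_{-i})=\sum_{s_i}P_\theta(s)$ are positive where needed); $\log=\ln$ is the natural logarithm, with the convention $\log 0=-\infty$ and $0\log 0=0$. $\delta_{s,s^\mu}$ is the Kronecker delta. $\mathcal{L}_L$ is the (normalised) log-likelihood and $\mathcal{PL}_L$ the pseudo-log-likelihood. *)

(* Defs.v *)
From HB Require Import structures.
From mathcomp Require Import all_boot all_order all_algebra.
From mathcomp Require Import all_classical all_reals all_analysis.
Set Implicit Arguments. Unset Strict Implicit. Unset Printing Implicit Defensive.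
Import Order.TTheory GRing.Theory Num.Theory.
Local Open Scope ring_scope.

Definition config (S : finType) (N : nat) := {ffun 'I_N -> S}.

Definition rconfig (S : finType) (N : nat) (i : 'I_N) :=
  {ffun {j : 'I_N | j != i} -> S}.

Definition rest (S : finType) (N : nat) (i : 'I_N) (s : config S N)
  : rconfig S i := [ffun j => s (val j)].

Definition marg (R : realType) (S : finType) (N : nat) (i : 'I_N)
  (P : config S N -> R) (r : rconfig S i) : R :=
  \sum_(s : config S N | rest i s == r) P s.

Definition condP (R : realType) (S : finType) (N : nat) (i : 'I_N)
  (P : config S N -> R) (s : config S N) : R :=
  P s / @marg R S N i P (rest i s).

Definition elog (R : realType) (x : R) : \bar R :=
  if 0 < x then (ln x)%:E else -oo%E.

Definition xlnx (R : realType) (x : R) : R := if 0 < x then x * ln x else 0.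

Definition empirical (R : realType) (S : finType) (N L : nat)
  (data : 'I_L -> config S N) (s : config S N) : R :=
  L%:R^-1 * \sum_(mu < L) (s == data mu)%:R.

Definition Hi (R : realType) (S : finType) (N L : nat)
  (data : 'I_L -> config S N) (i : 'I_N) : R :=
  - \sum_(r : rconfig S i) xlnx (@marg R S N i (empirical R data) r).

Definition loglik (R : realType) (S : finType) (N L : nat)
  (P : config S N -> R) (data : 'I_L -> config S N) : \bar R :=
  ((L%:R^-1 : R)%:E * \sum_(mu < L) elog (P (data mu)))%E.

Definition pseudologlik (R : realType) (S : finType) (N L : nat)
  (P : config S N -> R) (data : 'I_L -> config S N) : \bar R :=
  ((L%:R^-1 : R)%:E *
     \sum_(mu < L) \sum_(i < N) elog (@condP R S N i P (data mu)))%E.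

(* Main.v *)
Require Import Defs.
From HB Require Import structures.
From mathcomp Require Import all_boot all_order all_algebra.
From mathcomp Require Import all_classical all_reals all_analysis.
From mathcomp Require Import ring lra.
Import Order.TTheory GRing.Theory Num.Theory.
Local Open Scope ring_scope.

Section Aux.
Variables (R : realType) (S : finType) (N L : nat).

Lemma sum_marg (i : 'I_N) (P : config S N -> R) :
  \sum_(r : rconfig S i) @marg R S N i P r = \sum_(s : config S N) P s.
Proof.
rewrite (partition_big (rest i) xpredT) //=.
Qed.

Lemma marg_emp (data : 'I_L -> config S N) (i : 'I_N) r :
  @marg R S N i (empirical R data) r =
  L%:R^-1 * \sum_(mu < L) (rest i (data mu) == r)%:R.
Proof.
rewrite /marg /empirical -big_distrr /=; congr (_ * _).
rewrite exchange_big /=; apply: eq_bigr => mu _.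
rewrite big_mkcond /= (bigD1 (data mu)) //= eqxx big1 ?addr0.
  by case: (rest i (data mu) == r).
by move=> s /negbTE ->; case: (rest i s == r).
Qed.

Lemma regroup (data : 'I_L -> config S N) (i : 'I_N) (f : rconfig S i -> R) :
  \sum_(mu < L) f (rest i (data mu)) =
  \sum_(r : rconfig S i) (\sum_(mu < L) (rest i (data mu) == r)%:R) * f r.
Proof.
rewrite (partition_big (fun mu => rest i (data mu)) xpredT) //=.
apply: eq_bigr => r _; rewrite big_distrl /= big_mkcond /=.
apply: eq_bigr => mu _; case: eqP => [->|_]; by rewrite ?mul1r ?mul0r.
Qed.

Lemma gibbs_term (Q M : R) : 0 <= Q -> 0 <= M -> (0 < Q -> 0 < M) ->
  Q * ln M <= xlnx Q + M - Q.
Proof.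
move=> Q0 M0 QM; rewrite /xlnx; case: ifPn => [Qp|]; last first.
  rewrite -leNgt => Qle; have -> : Q = 0 by apply/eqP; rewrite eq_le Qle Q0.
  by rewrite mul0r add0r subr0.
have Mp := QM Qp.
have h : ln (M / Q) <= M / Q - 1.
  have := @le_ln1Dx R (M / Q - 1).
  rewrite addrCA subrr addr0; apply.
  rewrite ltrBrDl addrC addNr; exact: divr_gt0.
rewrite ln_div ?posrE // in h.
have := ler_wpM2l (ltW Qp) h.
rewrite mulrBr mulrBr mulr1 mulrCA divff ?gt_eqF // mulr1 => h2.
by rewrite -subr_ge0; rewrite -subr_ge0 in h2;
  rewrite (_ : _ - _ = (M - Q) - (Q * ln M - Q * ln Q)) //; ring.
Qed.


Lemma sum_emp (data : 'I_L -> config S N) (hL : (1 <= L)%N) :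
  \sum_(s : config S N) empirical R data s = 1.
Proof.
rewrite /empirical -big_distrr /= exchange_big /=.
rewrite (eq_bigr (fun _ => 1)); last first.
  move=> mu _; rewrite (bigD1 (data mu)) //= eqxx big1 ?addr0 //.
  by move=> s /negbTE ->.
by rewrite sumr_const card_ord -[1 *+ L]/(L%:R) mulVf // pnatr_eq0 -lt0n.
Qed.

Lemma emp_ge0 (data : 'I_L -> config S N) s : 0 <= empirical R data s.
Proof. by rewrite /empirical mulr_ge0 ?invr_ge0 // sumr_ge0. Qed.

Lemma marg_ge0 (i : 'I_N) (P : config S N -> R) r :
  (forall s, 0 <= P s) -> 0 <= @marg R S N i P r.
Proof. by move=> h; rewrite /marg sumr_ge0. Qed.

Lemma per_i (P : config S N -> R) (data : 'I_L -> config S N) (i : 'I_N)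
  (hL : (1 <= L)%N) (hP0 : forall s, 0 <= P s)
  (hP1 : \sum_(s : config S N) P s = 1)
  (hm : forall mu, 0 < @marg R S N i P (rest i (data mu))) :
  L%:R^-1 * \sum_(mu < L) ln (@marg R S N i P (rest i (data mu))) <=
  \sum_(r : rconfig S i) xlnx (@marg R S N i (empirical R data) r).
Proof.
rewrite (@regroup data i (fun r => ln (@marg R S N i P r))) big_distrr /=.
apply: (@le_trans _ _ (\sum_(r : rconfig S i)
   (xlnx (@marg R S N i (empirical R data) r) + @marg R S N i P r
     - @marg R S N i (empirical R data) r))).
  apply: ler_sum => r _; rewrite mulrA -marg_emp; apply: gibbs_term.
  - apply: marg_ge0; exact: emp_ge0.
  - exact: marg_ge0.
  - case: (pselect (exists mu, rest i (data mu) = r)) => [[mu <-] _|nex].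
      exact: hm.
    rewrite marg_emp big1 ?mulr0 ?ltxx // => mu _.
    by case: eqP => // h; exfalso; apply: nex; exists mu.
rewrite sumrB big_split /= sum_marg sum_marg hP1 sum_emp //.
by rewrite addrK.
Qed.

End Aux.

Lemma elog_condP (R : realType) (S : finType) (N : nat) (i : 'I_N)
  (P : config S N -> R) s :
  0 < P s -> 0 < @marg R S N i P (rest i s) ->
  elog (@condP R S N i P s) = (ln (P s) - ln (@marg R S N i P (rest i s)))%:E.
Proof.
by move=> h1 h2; rewrite /elog /condP divr_gt0 // ln_div ?posrE.
Qed.

Theorem mainTheorem1 (R : realType) (S : finType) (N L : nat)
  (Theta : Type) (P : Theta -> config S N -> R)
  (hN : (1 <= N)%N) (hL : (1 <= L)%N)
  (hP0 : forall th s, 0 <= P th s)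
  (hP1 : forall th, \sum_(s : config S N) P th s = 1)
  (data : 'I_L -> config S N)
  (th : Theta)
  (hmarg : forall (mu : 'I_L) (i : 'I_N),
      0 < @marg R S N i (P th) (rest i (data mu))) :
  (pseudologlik (P th) data - (\sum_(i < N) Hi R data i)%:E
     >= (N%:R : R)%:E * loglik (P th) data)%E.
Proof.
case: (pselect (forall mu, 0 < P th (data mu))) => [hpos|hneg].
  have El : loglik (P th) data =
      (L%:R^-1 * \sum_(mu < L) ln (P th (data mu)))%:E.
    rewrite /loglik (eq_bigr (fun mu => (ln (P th (data mu)))%:E)); last first.
      by move=> mu _; rewrite /elog hpos.
    by rewrite sumEFin -EFinM.
  have Ep : pseudologlik (P th) data =
      (L%:R^-1 * \sum_(mu < L) \sum_(i < N) (ln (P th (data mu)) -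
          ln (@marg R S N i (P th) (rest i (data mu)))))%:E.
    rewrite /pseudologlik.
    under eq_bigr => mu _ do under eq_bigr => i _ do
      rewrite elog_condP ?hpos ?hmarg //.
    under eq_bigr => mu _ do rewrite sumEFin.
    by rewrite sumEFin -EFinM.
  rewrite El Ep -EFinM -EFinB lee_fin.
  have key : \sum_(i < N) (L%:R^-1 * \sum_(mu < L)
        ln (@marg R S N i (P th) (rest i (data mu)))) <=
      \sum_(i < N) \sum_(r : rconfig S i)
        xlnx (@marg R S N i (empirical R data) r).
    apply: ler_sum => i _; apply: per_i => //; exact: hmarg.
  have E1 : \sum_(mu < L) \sum_(i < N) (ln (P th (data mu)) -
          ln (@marg R S N i (P th) (rest i (data mu)))) =
      N%:R * \sum_(mu < L) ln (P th (data mu)) -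
      \sum_(i < N) \sum_(mu < L) ln (@marg R S N i (P th) (rest i (data mu))).
    under eq_bigr => mu _ do rewrite sumrB sumr_const card_ord -mulr_natl.
    rewrite sumrB -mulr_sumr; congr (_ - _).
    by rewrite exchange_big.
  have E2 : \sum_(i < N) Hi R data i = - \sum_(i < N) \sum_(r : rconfig S i)
        xlnx (@marg R S N i (empirical R data) r).
    by rewrite /Hi sumrN.
  rewrite E1 E2 mulrBr opprK.
  rewrite -mulr_sumr in key.
  lra.
have [mu hmu] : exists mu, ~ 0 < P th (data mu).
  by apply: contrapT => hc; apply: hneg => mu; apply: contrapT => h; apply: hc; exists mu.
have Hs : forall (F : 'I_L -> \bar R), F mu = -oo%E ->
    (\sum_(mu < L) F mu)%R = -oo%E.
  by move=> F hF; apply/eqP; rewrite esum_eqNy; apply/existsP; exists mu; rewrite hF eqxx.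
have Ll : loglik (P th) data = -oo%E.
  rewrite /loglik Hs; last by rewrite /elog (negbTE (introN idP hmu)).
  by rewrite gt0_muleNy // lte_fin invr_gt0 ltr0n.
by rewrite Ll gt0_muleNy ?leNye // lte_fin ltr0n.
Qed.
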